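(* Let $A>0$, let $\mathcal{S} = \{x\in\mathbb{R}^N : \|x\|_2 > A\}$, and let $\widetilde f:\mathbb{R}^{N\times N}\to\mathbb{R}$ be a random differentiable function with $\mathbb{E}\|\nabla\widetilde f(X)\|_F^2 \le M_2$ for all $X\in\mathcal{O}(N)$. Then for any $v^{(1)},\dots,v^{(L)}\in\mathcal{S}$, $$\mathbb{E}\Big[\sum_{l=1}^L \big\|\nabla_{v^{(l)}} \widetilde f\big(H(v^{(1)})\cdots H(v^{(L)})\big)\big\|_2^2\Big] \le \frac{24}{A^2}\, N(N+2)\, L\, M_2 .$$
   Context: $\mathcal{O}(N)$ is the set of real $N\times N$ orthogonal matrices; $\|\cdot\|_F$ is the Frobenius norm. For nonzero $v\in\mathbb{R}^N$, $H(v)=I-2vv^\top/\|v\|_2^2$. The notation $\nabla_{v^{(l)}} g(H(v^{(1)})\cdots H(v^{(L)}))$ denotes the gradient with respect to $v^{(l)}$ of the composite function $(v^{(1)},\dots,v^{(L)})\mapsto g(H(v^{(1)})\cdots H(v^{(L)}))$. *)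

(* Defs.v *)
From HB Require Import structures.
From mathcomp Require Import all_boot all_order all_algebra.
From mathcomp Require Import all_classical all_reals all_analysis.
Set Implicit Arguments. Unset Strict Implicit. Unset Printing Implicit Defensive.
Import Order.TTheory GRing.Theory Num.Theory.
Import numFieldNormedType.Exports.
Local Open Scope ring_scope.

Definition orthogonal_mx {R : realType} {N : nat} (X : 'M[R]_N) : Prop :=
  X^T *m X = 1%:M.

Definition sqnorm2 {R : realType} {N : nat} (v : 'rV[R]_N) : R :=
  \sum_(j < N) (v 0 j) ^+ 2.

Definition sqfrob {R : realType} {N : nat} (X : 'M[R]_N) : R :=
  \sum_(i < N) \sum_(j < N) (X i j) ^+ 2.

(* Householder reflection H(v) = I - 2 v v^T / ||v||_2^2 (v a row vector, so v v^T is v^T *m v) *)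
Definition householder {R : realType} {N : nat} (v : 'rV[R]_N) : 'M[R]_N :=
  1%:M - (2 / sqnorm2 v) *: (v^T *m v).

Definition gradM {R : realType} {N : nat} (g : 'M[R]_N -> R) (X : 'M[R]_N) : 'M[R]_N :=
  \matrix_(i, j) derive g X (delta_mx i j).

Definition gradV {R : realType} {N : nat} (h : 'rV[R]_N -> R) (v : 'rV[R]_N) : 'rV[R]_N :=
  \row_j derive h v (delta_mx 0 j).

Definition prodH {R : realType} {N L : nat} (vs : 'I_L -> 'rV[R]_N) : 'M[R]_N :=
  \big[mulmx/1%:M]_(l < L) householder (vs l).

Definition upd {R : realType} {N L : nat} (vs : 'I_L -> 'rV[R]_N) (l : 'I_L) (w : 'rV[R]_N) :
  'I_L -> 'rV[R]_N := fun k => if k == l then w else vs k.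

Definition gradHl {R : realType} {N L : nat} (g : 'M[R]_N -> R) (vs : 'I_L -> 'rV[R]_N)
  (l : 'I_L) : 'rV[R]_N :=
  gradV (fun w => g (prodH (upd vs l w))) (vs l).

(* Main.v *)
Require Import Defs.
From HB Require Import structures.
From mathcomp Require Import all_boot all_order all_algebra.
From mathcomp Require Import all_classical all_reals all_analysis.
From mathcomp Require Import ring lra.
Import Order.TTheory GRing.Theory Num.Theory.
Import numFieldNormedType.Exports.
Local Open Scope ring_scope.
Import HBNNSimple.

Lemma int_le_scale (R : realType) (d : measure_display) (Omega : measurableType d)
  (P : {measure set Omega -> \bar R}) (F G : Omega -> R) (c : R) :
  0 < c -> (forall w, 0 <= F w) -> (forall w, 0 <= G w) -> (forall w, F w <= c * G w) ->
  (\int[P]_(w in setT) (F w)%:E <= c%:E * \int[P]_(w in setT) (G w)%:E)%E.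
Proof.
move=> c0 F0 G0 FG.
rewrite !ge0_integralTE; [|by move=> w; rewrite lee_fin..].
apply/ge_ereal_sup => /= _ [h /= hF <-].
have ci0 : 0 <= c^-1 by rewrite invr_ge0 ltW.
pose h' := scale_nnsfun h ci0.
have -> : sintegral P h = (c%:E * sintegral P h')%E.
  rewrite -sintegralrM.
  apply: eq_sintegral => x /=. by rewrite mulrA mulfV ?gt_eqF // mul1r.
rewrite lee_pmul2l ?lte_fin //.
  apply: ereal_sup_ubound => /=; exists h' => // x.
  rewrite /h' /= lee_fin ler_pdivrMl //.
  have := hF x; rewrite lee_fin => hx; exact: (le_trans hx (FG x)).
Qed.

Section Alg.
Variables (R : realType) (N : nat).
Implicit Types (v : 'rV[R]_N) (X Y : 'M[R]_N).

Lemma vvT v : v *m v^T = (sqnorm2 v)%:M.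
Proof.
apply/matrixP => i j; rewrite !ord1 !mxE /sqnorm2 /= mulr1n.
by apply: eq_bigr => k _; rewrite !mxE expr2.
Qed.

Lemma VV v : (v^T *m v) *m (v^T *m v) = sqnorm2 v *: (v^T *m v).
Proof.
by rewrite mulmxA -[v^T *m v *m v^T]mulmxA vvT mul_mx_scalar -scalemxAl.
Qed.

Lemma house_sym v : (householder v)^T = householder v.
Proof. by rewrite /householder linearB /= trmx1 linearZ /= trmx_mul trmxK. Qed.

Lemma house_orth v : sqnorm2 v != 0 -> (householder v)^T *m householder v = 1%:M.
Proof.
move=> s0; rewrite house_sym /householder mulmxBl !mulmxBr mul1mx mulmx1.
rewrite -!scalemxAl -!scalemxAr mul1mx scalerA VV scalerA.
set V := v^T *m v; set s := sqnorm2 v.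
have -> : 2 / s * (2 / s) * s = 2 / s + 2 / s.
  by field; rewrite s0.
by rewrite scalerDl opprB addrK subrK.
Qed.

Lemma orth_mul X Y : orthogonal_mx X -> orthogonal_mx Y -> orthogonal_mx (X *m Y).
Proof.
rewrite /orthogonal_mx => hX hY.
by rewrite trmx_mul mulmxA -[Y^T *m X^T *m X]mulmxA hX mulmx1 hY.
Qed.

Lemma orth1 : orthogonal_mx (1%:M : 'M[R]_N).
Proof. by rewrite /orthogonal_mx trmx1 mulmx1. Qed.

Lemma orth_r X : orthogonal_mx X -> X *m X^T = 1%:M.
Proof. by move=> h; apply: mulmx1C. Qed.

Lemma sqfrob_tr X : sqfrob X = \tr (X^T *m X).
Proof.
rewrite /sqfrob /mxtrace exchange_big; apply: eq_bigr => i _.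
by rewrite !mxE; apply: eq_bigr => k _; rewrite !mxE expr2.
Qed.

Lemma sqfrob_orth X Y Z : orthogonal_mx X -> orthogonal_mx Z ->
  sqfrob (X *m Y *m Z) = sqfrob Y.
Proof.
move=> hX hZ; rewrite !sqfrob_tr !trmx_mul.
have -> : Z^T *m (Y^T *m X^T) *m (X *m Y *m Z) = Z^T *m ((Y^T *m Y) *m Z).
  by rewrite !mulmxA -[Z^T *m Y^T *m X^T *m X]mulmxA hX mulmx1.
by rewrite mxtrace_mulC -(mulmxA (Y^T *m Y) Z Z^T) (orth_r Z hZ) mulmx1.
Qed.

Lemma CS (I : finType) (a b : I -> R) :
  (\sum_i a i * b i) ^+ 2 <= (\sum_i a i ^+ 2) * (\sum_i b i ^+ 2).
Proof.
set S := \sum_i a i * b i; set A := \sum_i a i ^+ 2; set B := \sum_i b i ^+ 2.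
have B0 : 0 <= B by apply: sumr_ge0 => i _; apply: sqr_ge0.
have [Bz|Bp] := eqVneq B 0.
  have bz : forall i, b i = 0.
    move=> i; apply/eqP; rewrite -sqrf_eq0; apply/eqP.
    by move/eqP: Bz; rewrite psumr_eq0 => [/allP/(_ i (mem_index_enum i))/eqP|j _]; [|apply: sqr_ge0].
  have -> : S = 0 by rewrite /S big1 // => i _; rewrite bz mulr0.
  by rewrite Bz expr0n /= mulr0.
have Bp' : 0 < B by rewrite lt_def Bp B0.
have H : 0 <= \sum_i (B * a i - S * b i) ^+ 2 by apply: sumr_ge0 => i _; apply: sqr_ge0.
have E : \sum_i (B * a i - S * b i) ^+ 2 = B * (A * B - S ^+ 2).
  transitivity (\sum_i (B ^+ 2 * a i ^+ 2 - (2 * B * S) * (a i * b i) + S ^+ 2 * b i ^+ 2)).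
    by apply: eq_bigr => i _; ring.
  rewrite big_split sumrB /= -!mulr_sumr -/A -/B -/S; ring.
rewrite E pmulr_rge0 // in H.
by rewrite -subr_ge0.
Qed.


Definition dHj v (j : 'I_N) : 'M[R]_N :=
  (4 * v 0 j / sqnorm2 v ^+ 2) *: (v^T *m v)
  - (2 / sqnorm2 v) *: ((delta_mx 0 j)^T *m v + v^T *m delta_mx 0 j).

Lemma outerE (x y : 'rV[R]_N) a b : (x^T *m y) a b = x 0 a * y 0 b.
Proof. by rewrite !mxE big_ord1 !mxE. Qed.

Lemma deltaE (j a : 'I_N) : (delta_mx 0 j : 'rV[R]_N) 0 a = (a == j)%:R.
Proof. by rewrite mxE eqxx. Qed.

Lemma sq3 (p q r : R) : (p - (q + r)) ^+ 2 <= 3 * (p ^+ 2 + q ^+ 2 + r ^+ 2).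
Proof.
rewrite -subr_ge0.
have -> : 3 * (p ^+ 2 + q ^+ 2 + r ^+ 2) - (p - (q + r)) ^+ 2
  = (p + q) ^+ 2 + (p + r) ^+ 2 + (q - r) ^+ 2 by ring.
by rewrite !addr_ge0 ?sqr_ge0.
Qed.

Lemma sum_delta (j : 'I_N) (c : R) : \sum_(a < N) (a == j)%:R * c = c.
Proof.
rewrite (bigD1 j) //= eqxx mul1r big1 ?addr0 // => a /negbTE ->.
by rewrite mul0r.
Qed.

Lemma sqfrob_dH v j : 0 < sqnorm2 v -> sqfrob (dHj v j) <= 72 / sqnorm2 v.
Proof.
move=> sp; set s := sqnorm2 v.
set al := 4 * v 0 j / s ^+ 2; set be := 2 / s.
pose e (a : 'I_N) : R := (a == j)%:R.
have ee a : e a ^+ 2 = e a by rewrite /e; case: (a == j); rewrite ?expr0n ?expr1n.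
apply: (@le_trans _ _ (\sum_(a < N) \sum_(b < N)
   3 * (al ^+ 2 * (v 0 a ^+ 2 * v 0 b ^+ 2) + be ^+ 2 * (e a * v 0 b ^+ 2)
        + be ^+ 2 * (v 0 a ^+ 2 * e b)))).
  apply: ler_sum => a _; apply: ler_sum => b _.
  have -> : dHj v j a b
    = al * (v 0 a * v 0 b) - (be * (e a * v 0 b) + be * (v 0 a * e b)).
    rewrite /dHj !mxE !big_ord1 !mxE eqxx /= /al /be /e /s; ring.
  apply: le_trans (sq3 _ _ _) _.
  by rewrite !exprMn ee ee.
apply: (@le_trans _ _ (3 * (al ^+ 2 * s ^+ 2 + 2 * (be ^+ 2 * s)))).
  rewrite le_eqVlt; apply/orP; left; apply/eqP.
  transitivity (\sum_(a < N) \sum_(b < N)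
    (3 * al ^+ 2 * (v 0 a ^+ 2 * v 0 b ^+ 2) + 3 * be ^+ 2 * (e a * v 0 b ^+ 2)
        + 3 * be ^+ 2 * (v 0 a ^+ 2 * e b))).
    by apply: eq_bigr => a _; apply: eq_bigr => b _; ring.
  have sE : \sum_(b < N) v 0 b ^+ 2 = s by [].
  have eS : \sum_(b < N) e b = 1 by rewrite -[RHS](sum_delta j 1); apply: eq_bigr => b _; rewrite mulr1.
  transitivity (\sum_(a < N) ((3 * al ^+ 2 * s + 3 * be ^+ 2) * v 0 a ^+ 2 + (3 * be ^+ 2 * s) * e a)).
    apply: eq_bigr => a _.
    transitivity (\sum_(b < N) ((3 * al ^+ 2 * v 0 a ^+ 2) * v 0 b ^+ 2
       + (3 * be ^+ 2 * e a) * v 0 b ^+ 2 + (3 * be ^+ 2 * v 0 a ^+ 2) * e b)).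
      by apply: eq_bigr => b _; ring.
    by rewrite !big_split /= -!mulr_sumr sE eS; ring.
  by rewrite big_split /= -!mulr_sumr sE eS; ring.
have vj2 : v 0 j ^+ 2 <= s.
  rewrite /s /sqnorm2 (bigD1 j) //= lerDl; apply: sumr_ge0 => i _; apply: sqr_ge0.
have s0 : s != 0 by rewrite gt_eqF.
have -> : 3 * (al ^+ 2 * s ^+ 2 + 2 * (be ^+ 2 * s)) = (48 * (v 0 j ^+ 2 / s) + 24) / s.
  rewrite /al /be; field; exact: s0.
rewrite ler_pM2r ?invr_gt0 //.
have : v 0 j ^+ 2 / s <= 1 by rewrite ler_pdivrMr // mul1r.
lra.
Qed.

End Alg.
Arguments dHj {R N}.

Section Der.
Variable R : realType.

Lemma is_derive_poly2 (a b c x : R) :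
  is_derive x 1 (fun t : R => a * t ^+ 2 + b * t + c) (2 * a * x + b).
Proof.
have E : (fun t : R => a * t ^+ 2 + b * t + c) =
  (a \*: ((@id R) ^+ 2) + b \*: (@id R) + cst c).
  by apply/funext => t /=.
rewrite E; apply: is_derive_eq.
rewrite /GRing.scale /= expr1. ring.
Qed.

Lemma der_ratio (p q : R -> R) (x dp dq : R) :
  is_derive x 1 p dp -> is_derive x 1 q dq -> q x != 0 ->
  is_derive x 1 (fun t => p t / q t) ((dp * q x - p x * dq) / q x ^+ 2).
Proof.
move=> hp hq qx0.
have hqi : is_derive x 1 (fun y => (q y)^-1) (- (q x) ^- 2 *: dq).
  apply: DeriveDef; first exact: derivableV (@ex_derive _ _ _ _ _ _ _ hq).
  by rewrite deriveV ?derive_val //; exact: ex_derive.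
have E : (fun t => p t / q t) = p * (fun y => (q y)^-1) by apply/funext.
rewrite E; apply: is_derive_eq.
rewrite /GRing.scale /=; field; exact: qx0.
Qed.

Lemma der_scalel (W : normedModType R) (k : R -> R) (M : W) (x dk : R) :
  is_derive x 1 k dk -> is_derive x 1 (fun t => k t *: M) (dk *: M).
Proof.
move=> hk.
have dk' : differentiable k x by apply/derivable1_diffP; exact: ex_derive.
have dZ := differentiableZl M dk'.
apply: DeriveDef; first exact: diff_derivable.
rewrite deriveE // diffZl //; congr (_ *: _).
by rewrite -deriveE // derive_val.
Qed.
End Der.
Arguments is_derive_poly2 {R}.
Arguments der_ratio {R}.
Arguments der_scalel {R W}.

Section Main.
Variables (R : realType) (N : nat).

Lemma sq_path (v : 'rV[R]_N) j t :
  sqnorm2 (t *: delta_mx 0 j + v) = 1 * t ^+ 2 + (2 * v 0 j) * t + sqnorm2 v.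
Proof.
rewrite /sqnorm2.
transitivity (\sum_(k < N) ((k == j)%:R * (t ^+ 2 + 2 * t * v 0 k) + v 0 k ^+ 2)).
  apply: eq_bigr => k _; rewrite !mxE eqxx /=.
  by case: (k == j) => /=; ring.
rewrite big_split /= (bigD1 j) //= eqxx big1 ?addr0; last first.
  by move=> k /negbTE ->; rewrite mul0r.
rewrite (_ : true%:R = 1 :> R) // mul1r. ring.
Qed.

Lemma outer_path (v e : 'rV[R]_N) t :
  (t *: e + v)^T *m (t *: e + v) =
  v^T *m v + t *: (e^T *m v + v^T *m e) + t ^+ 2 *: (e^T *m e).
Proof.
apply/matrixP => a b; rewrite !mxE !big_ord1 !mxE; ring.
Qed.


Lemma deriv_psi (Pm Qm : 'M[R]_N) (v : 'rV[R]_N) (j : 'I_N) : 0 < sqnorm2 v ->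
  is_derive (0:R) 1 (fun t : R => Pm *m householder (t *: delta_mx 0 j + v) *m Qm)
    (Pm *m dHj v j *m Qm).
Proof.
move=> sp; set s := sqnorm2 v; set e : 'rV[R]_N := delta_mx 0 j.
pose q := fun t : R => 1 * t ^+ 2 + (2 * v 0 j) * t + s.
pose M0 := Pm *m (v^T *m v) *m Qm.
pose M1 := Pm *m (e^T *m v + v^T *m e) *m Qm.
pose M2 := Pm *m (e^T *m e) *m Qm.
pose k0 := fun t : R => (0 * t ^+ 2 + 0 * t + 2) / q t.
pose k1 := fun t : R => (0 * t ^+ 2 + 2 * t + 0) / q t.
pose k2 := fun t : R => (2 * t ^+ 2 + 0 * t + 0) / q t.
have q0 : q 0 = s by rewrite /q; ring.
have q0n : q 0 != 0 by rewrite q0 gt_eqF.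
have dq : is_derive (0:R) 1 q (2 * 1 * 0 + 2 * v 0 j) := is_derive_poly2 _ _ _ _.
have d0 := der_scalel _ M0 _ _ (der_ratio _ _ _ _ _ (is_derive_poly2 0 0 2 0) dq q0n).
have d1 := der_scalel _ M1 _ _ (der_ratio _ _ _ _ _ (is_derive_poly2 0 2 0 0) dq q0n).
have d2 := der_scalel _ M2 _ _ (der_ratio _ _ _ _ _ (is_derive_poly2 2 0 0 0) dq q0n).
have E : (fun t : R => Pm *m householder (t *: e + v) *m Qm) =
  cst (Pm *m Qm) - (fun t => k0 t *: M0) - (fun t => k1 t *: M1) - (fun t => k2 t *: M2).
  apply/funext => t /=.
  rewrite /householder sq_path outer_path -/s.
  transitivity (Pm *m Qm - k0 t *: M0 - k1 t *: M1 - k2 t *: M2); last by [].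
  rewrite mulmxBr mulmx1 mulmxBl -scalemxAr -scalemxAl !mulmxDr !mulmxDl.
  rewrite -!scalemxAr -!scalemxAl -/M0 -/M1 -/M2 !scalerDr !scalerA opprD opprD !addrA.
  have c0 : k0 t = 2 / (1 * t ^+ 2 + 2 * v 0 j * t + s) by rewrite /k0 /q; ring.
  have c1 : k1 t = 2 / (1 * t ^+ 2 + 2 * v 0 j * t + s) * t by rewrite /k1 /q; ring.
  have c2 : k2 t = 2 / (1 * t ^+ 2 + 2 * v 0 j * t + s) * t ^+ 2 by rewrite /k2 /q; ring.
  by rewrite c0 c1 c2.
rewrite E; apply: is_derive_eq.
set a0 := (X in 0 - X *: M0 - _ - _).
set a1 := (X in _ - X *: M1 - _).
set a2 := (X in _ - X *: M2).
have s0 : s != 0 by rewrite gt_eqF.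
have -> : a0 = - (4 * v 0 j / s ^+ 2) by rewrite /a0 q0; ring.
have -> : a1 = 2 / s by rewrite /a1 q0; field.
have -> : a2 = 0 by rewrite /a2 q0; ring.
rewrite /dHj mulmxBr mulmxBl -!scalemxAr -!scalemxAl -/s -/e -/M0 -/M1.
by rewrite scale0r subr0 scaleNr sub0r opprK.
Qed.


Lemma derive_line (W : normedModType R) (F : 'rV[R]_N -> W) (v e : 'rV[R]_N) :
  derive F v e = derive (fun h : R => F (h *: e + v)) 0 1.
Proof.
rewrite /derive; set g1 := fun h => h^-1 *: _; set g2 := fun h => h^-1 *: _.
suff -> : g1 = g2 by [].
by rewrite funeqE /g1 /g2 => h /=; rewrite addr0 scale0r add0r [_%:A]mulr1.
Qed.

Lemma grad_comp (g : 'M[R]_N -> R) (Pm Qm : 'M[R]_N) (v : 'rV[R]_N) (j : 'I_N) :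
  0 < sqnorm2 v ->
  differentiable g (Pm *m householder v *m Qm) ->
  derive (fun w => g (Pm *m householder w *m Qm)) v (delta_mx 0 j) =
  \sum_a \sum_b (Pm *m dHj v j *m Qm) a b * gradM g (Pm *m householder v *m Qm) a b.
Proof.
move=> sp dg.
set X0 := Pm *m householder v *m Qm.
pose psi := fun h : R => Pm *m householder (h *: delta_mx 0 j + v) *m Qm.
have hpsi := deriv_psi Pm Qm v j sp.
have psi0 : psi 0 = X0 by rewrite /psi scale0r add0r.
have dpsi : differentiable psi 0 by apply/derivable1_diffP; exact: ex_derive.
have dg' : differentiable g (psi 0) by rewrite psi0.
rewrite derive_line.
have -> : (fun h : R => g (Pm *m householder (h *: delta_mx 0 j + v) *m Qm)) = g \o psi by [].
rewrite deriveE; last exact: differentiable_comp.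
rewrite diff_comp //=.
have -> : 'd psi 0 1 = Pm *m dHj v j *m Qm by rewrite -deriveE //; case: hpsi.
rewrite psi0.
set D := Pm *m dHj v j *m Qm.
rewrite [in LHS](matrix_sum_delta D) linear_sum; apply: eq_bigr => a _.
rewrite linear_sum; apply: eq_bigr => b _.
by rewrite linearZ /= -deriveE // /gradM !mxE.
Qed.

End Main.

Section Split.
Variables (R : realType) (N : nat).

HB.instance Definition _ := Monoid.isLaw.Build 'M[R]_N 1%:M (@mulmx R N N N)
  (@mulmxA R N N N N) (@mul1mx R N N) (@mulmx1 R N N).

Lemma orth_big (I : Type) (r : seq I) (P : pred I) (F : I -> 'M[R]_N) :
  (forall i, P i -> orthogonal_mx (F i)) ->
  orthogonal_mx (\big[mulmx/1%:M]_(i <- r | P i) F i).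
Proof.
move=> h; apply: (big_ind (fun X : 'M[R]_N => orthogonal_mx X)).
- exact: orth1.
- by move=> X Y; apply: orth_mul.
- exact: h.
Qed.

Lemma prodH_split L (vs : 'I_L -> 'rV[R]_N) (l : 'I_L) :
  (forall k, sqnorm2 (vs k) != 0) ->
  exists Pm Qm, [/\ orthogonal_mx Pm, orthogonal_mx Qm &
    forall w, prodH (upd vs l w) = Pm *m householder w *m Qm].
Proof.
case: L vs l => [|L] vs l hs; first by case: l.
pose G k := householder (vs (inord k)).
exists (\big[mulmx/1%:M]_(0 <= k < l) G k), (\big[mulmx/1%:M]_(l.+1 <= k < L.+1) G k).
split.
- by apply: orth_big => i _; apply: house_orth.
- by apply: orth_big => i _; apply: house_orth.
move=> w; rewrite /prodH.
have -> : \big[mulmx/1%:M]_(k < L.+1) householder (upd vs l w k) =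
   \big[mulmx/1%:M]_(0 <= k < L.+1) householder (upd vs l w (inord k)).
  by rewrite big_mkord; apply: eq_bigr => k _; rewrite inord_val.
rewrite (@big_cat_nat _ _ _ l) //; last exact: ltnW.
rewrite (big_ltn (m := l)) //= mulmxA; congr (_ *m _ *m _).
- apply: eq_big_nat => k /andP[_ kl]; rewrite /G /upd.
  suff : inord k != l by move/negbTE ->.
  apply/eqP => /(congr1 val); rewrite /= inordK; last exact: (ltn_trans kl).
  by move=> ek; move: kl; rewrite ek ltnn.
- by rewrite /upd inord_val eqxx.
- apply: eq_big_nat => k /andP[lk kL]; rewrite /G /upd.
  suff : inord k != l by move/negbTE ->.
  apply/eqP => /(congr1 val); rewrite /= inordK //.
  by move=> ek; move: lk; rewrite ek ltnn.
Qed.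
End Split.

Section Final.
Variables (R : realType) (N : nat).

Lemma sqfrob_ge0 (X : 'M[R]_N) : 0 <= sqfrob X.
Proof. by apply: sumr_ge0 => i _; apply: sumr_ge0 => j _; apply: sqr_ge0. Qed.

Lemma CS_frob (D G : 'M[R]_N) :
  (\sum_a \sum_b D a b * G a b) ^+ 2 <= sqfrob D * sqfrob G.
Proof. by rewrite /sqfrob !pair_bigA /=; apply: CS. Qed.

Lemma per_l L (g : 'M[R]_N -> R) (vs : 'I_L -> 'rV[R]_N) (l : 'I_L) :
  (forall k, 0 < sqnorm2 (vs k)) -> (forall X, differentiable g X) ->
  sqnorm2 (gradHl g vs l) <= N%:R * (72 / sqnorm2 (vs l)) * sqfrob (gradM g (prodH vs)).
Proof.
move=> sp dg.
have [Pm [Qm [oP oQ hsplit]]] := prodH_split _ _ _ vs l (fun k => lt0r_neq0 (sp k)).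
have X0E : prodH vs = Pm *m householder (vs l) *m Qm.
  rewrite -hsplit; congr prodH; apply/funext => k; rewrite /upd.
  by case: eqP => // ->.
rewrite /gradHl /gradV [in X in X <= _]/sqnorm2.
have Fe : (fun w => g (prodH (upd vs l w))) = (fun w => g (Pm *m householder w *m Qm)).
  by apply/funext => w; rewrite hsplit.
rewrite Fe X0E.
set G := gradM g _.
apply: (@le_trans _ _ (\sum_(j < N) (72 / sqnorm2 (vs l)) * sqfrob G)).
  apply: ler_sum => j _; rewrite mxE grad_comp //.
  apply: le_trans (CS_frob _ _) _; rewrite sqfrob_orth //.
  by apply: ler_wpM2r; [apply: sqfrob_ge0 | apply: sqfrob_dH].
rewrite sumr_const card_ord -mulr_natl le_eqVlt; apply/orP; left; apply/eqP; ring.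
Qed.


Lemma sum_bound L (g : 'M[R]_N -> R) (vs : 'I_L -> 'rV[R]_N) (A : R) :
  0 < A -> (forall X, differentiable g X) -> (forall l, A < Num.sqrt (sqnorm2 (vs l))) ->
  \sum_(l < L) sqnorm2 (gradHl g vs l) <=
    (24 / A ^+ 2 * (N * (N + 2))%:R * L%:R) * sqfrob (gradM g (prodH vs)).
Proof.
move=> A0 dg hA.
have sA : forall l, A ^+ 2 < sqnorm2 (vs l).
  move=> l; have s0 : 0 <= sqnorm2 (vs l) by apply: sumr_ge0 => i _; apply: sqr_ge0.
  have := hA l; have := sqr_sqrtr s0; set r := Num.sqrt _ => r2 Ar.
  rewrite -r2; nra.
have sp : forall l, 0 < sqnorm2 (vs l).
  by move=> l; apply: lt_trans (sA l); apply: exprn_gt0.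
set G := sqfrob _.
have G0 : 0 <= G by apply: sqfrob_ge0.
apply: (@le_trans _ _ (\sum_(l < L) N%:R * (72 / A ^+ 2) * G)).
  apply: ler_sum => l _; apply: le_trans (per_l _ _ _ l sp dg) _.
  apply: ler_wpM2r => //; apply: ler_wpM2l => //.
  apply: ler_wpM2l => //; rewrite lef_pV2 ?posrE ?exprn_gt0 //; exact: ltW.
rewrite sumr_const card_ord.
have -> : N%:R * (72 / A ^+ 2) * G *+ L = (L%:R * (N%:R * (72 / A ^+ 2))) * G.
  by rewrite -mulr_natl; ring.
apply: ler_wpM2r => //.
set a := (A ^+ 2)^-1.
have a0 : 0 <= a by rewrite /a invr_ge0 exprn_ge0 // ltW.
rewrite natrM natrD -subr_ge0.
set lhs := (X in 0 <= X).
have -> : lhs = 24 * (a * L%:R * (N%:R * (N%:R - 1))) by rewrite /lhs /a; ring.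
apply: mulr_ge0 => //; apply: mulr_ge0; first by apply: mulr_ge0.
case: N => [|n]; first by rewrite mul0r.
by apply: mulr_ge0 => //; rewrite subr_ge0 ler1n.
Qed.

End Final.


Theorem mainTheorem8 (R : realType) (d : measure_display) (Omega : measurableType d)
  (P : probability Omega R) (N L : nat) (A M2 : R)
  (f : Omega -> 'M[R]_N -> R) :
  0 < A ->
  (forall X : 'M[R]_N, measurable_fun setT (fun w => f w X)) ->
  (forall w (X : 'M[R]_N), differentiable (f w) X) ->
  (forall X : 'M[R]_N, orthogonal_mx X ->
     (\int[P]_(w in setT) (sqfrob (gradM (f w) X))%:E <= M2%:E)%E) ->
  forall vs : 'I_L -> 'rV[R]_N,
  (forall l, A < Num.sqrt (sqnorm2 (vs l))) ->
  (\int[P]_(w in setT) (\sum_(l < L) sqnorm2 (gradHl (f w) vs l))%:E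
     <= (24 / A ^+ 2 * (N * (N + 2))%:R * L%:R * M2)%:E)%E.
Proof.
move=> A0 mf df hM vs hA.
set c := 24 / A ^+ 2 * (N * (N + 2))%:R * L%:R.
set X0 := prodH vs.
have sp : forall l, sqnorm2 (vs l) != 0.
  move=> l; apply/eqP => s0; move: (hA l); rewrite s0 sqrtr0 => h.
  by move: (lt_trans A0 h); rewrite ltxx.
have oX0 : orthogonal_mx X0.
  by rewrite /X0 /prodH; apply: orth_big => k _; apply: house_orth.
have hB := hM X0 oX0.
pose F w := \sum_(l < L) sqnorm2 (gradHl (f w) vs l).
pose Gf w := sqfrob (gradM (f w) X0).
have FG : forall w, F w <= c * Gf w.
  by move=> w; apply: (sum_bound _ _ L (f w) vs A A0 (df w) hA).
have F0 : forall w, 0 <= F w.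
  by move=> w; apply: sumr_ge0 => l _; apply: sumr_ge0 => j _; apply: sqr_ge0.
have G0 : forall w, 0 <= Gf w by move=> w; apply: sqfrob_ge0.
have c0 : 0 <= c.
  rewrite /c; apply: mulr_ge0 => //; apply: mulr_ge0 => //.
  by apply: divr_ge0 => //; apply: exprn_ge0; apply: ltW.
rewrite le_eqVlt in c0; case/orP: c0 => [/eqP c0|cp].
  have Fz : forall w, F w = 0.
    move=> w; apply/eqP; rewrite eq_le F0 andbT.
    by have := FG w; rewrite -c0 mul0r.
  under eq_integral => w _ do rewrite -/(F w) Fz.
  by rewrite integral0 -c0 mul0r.
apply: le_trans (@int_le_scale _ _ _ P F Gf c cp F0 G0 FG) _.
by rewrite (EFinM c M2) lee_pmul2l ?lte_fin.
Qed.
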